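(* Let $X$ be an $n$-dimensional projective space over an arbitrary field and $K$ a $k$-dimensional subspace of $X$ with $-1\le k\le\frac{n-1}{2}$. Then for every point $P$ of $K$ there is a hyperplane $H_P$ of $X$ containing $P$ such that the set $\mathcal B_{X/P}$ of all lines of $X$ through $P$ contained in $H_P$ (which is a $(1,0)$-blocking set in $X/P$, i.e. every plane of $X$ through $P$ contains a line of $\mathcal B_{X/P}$) satisfies: (1) every line of $K$ through $P$ belongs to $\mathcal B_{X/P}$; and (2) for every line $L$ of $K$, the set $\mathcal B_L:=\bigcup_{P\in L}\bigl(\mathcal B_{X/P}\setminus\{\text{lines of }K\text{ through }P\}\bigr)$ blocks $\mathcal S_L:=\{S: S\text{ a plane of }X,\ K\cap S=L\}$, i.e. every $S\in\mathcal S_L$ contains some line of $\mathcal B_L$.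
   Context: Projective dimension is used. For a point $P$ of $X$, the quotient $X/P$ is the projective space whose $r$-dimensional subspaces are the $(r+1)$-dimensional subspaces of $X$ through $P$; thus its points are the lines of $X$ through $P$ and its hyperplanes are the hyperplanes of $X$ through $P$. A $(1,0)$-blocking set in a projective space is a set of points meeting every line. *)

(* Defs.v *)
From HB Require Import structures.
From mathcomp Require Import all_boot all_order all_algebra.
Set Implicit Arguments. Unset Strict Implicit. Unset Printing Implicit Defensive.
Import GRing.Theory.
Local Open Scope ring_scope.

(* The n-dimensional projective space PG(n, F) is modelled by the vector space
   F^(n+1) = 'rV[F]_(n.+1); a projective subspace of projective dimension r is
   a vector subspace of (vector) dimension r+1.  Incidence = inclusion. *)
Definition PSpace (F : fieldType) (n : nat) := {vspace 'rV[F]_(n.+1)}.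

Definition is_point {F : fieldType} {n : nat} (U : PSpace F n) : bool := \dim U == 1%N.
Definition is_line  {F : fieldType} {n : nat} (U : PSpace F n) : bool := \dim U == 2%N.
Definition is_plane {F : fieldType} {n : nat} (U : PSpace F n) : bool := \dim U == 3%N.
Definition is_hyperplane {F : fieldType} {n : nat} (U : PSpace F n) : bool := \dim U == n.

(* Main.v *)
Require Import Defs.
From HB Require Import structures.
From mathcomp Require Import all_boot all_order all_algebra.
From mathcomp Require Import zify.
Local Open Scope ring_scope.
Import GRing.Theory.

Definition dotv {F : fieldType} {m : nat} (u w : 'rV[F]_m) : F := (u *m w^T) 0 0.

Lemma dotvC (F : fieldType) m (u w : 'rV[F]_m) : dotv u w = dotv w u.
Proof. by rewrite /dotv -{1}(trmxK u) -trmx_mul mxE. Qed.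

Lemma dotvDl (F : fieldType) m a (u u' w : 'rV[F]_m) :
  dotv (a *: u + u') w = a * dotv u w + dotv u' w.
Proof. by rewrite /dotv mulmxDl -scalemxAl !mxE. Qed.

Lemma dotvDr (F : fieldType) m a (u u' w : 'rV[F]_m) :
  dotv w (a *: u + u') = a * dotv w u + dotv w u'.
Proof. by rewrite dotvC dotvDl !(dotvC _ _ w). Qed.

Lemma dotvZr (F : fieldType) m a (u w : 'rV[F]_m) :
  dotv w (a *: u) = a * dotv w u.
Proof. by rewrite dotvC /dotv -scalemxAl mxE; congr (_ * _); apply: dotvC. Qed.

Lemma dotv_sumr (F : fieldType) m k (c : 'I_k -> F) (e : 'I_k -> 'rV[F]_m) w :
  dotv (\sum_(i < k) c i *: e i) w = \sum_(i < k) c i * dotv (e i) w.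
Proof.
rewrite /dotv mulmx_suml summxE; apply: eq_bigr => i _; by rewrite -scalemxAl mxE.
Qed.

Lemma dotv_delta (F : fieldType) m j (w : 'rV[F]_m) : dotv (delta_mx 0 j) w = w 0 j.
Proof. by rewrite /dotv -rowE !mxE. Qed.
Lemma exists_pairing (F : fieldType) n (K : {vspace 'rV[F]_(n.+1)}) :
  (2 * \dim K <= n.+1)%N ->
  exists f : 'rV[F]_(n.+1) -> 'rV[F]_(n.+1),
   [/\ forall a x y, f (a *: x + y) = a *: f x + f y,
       forall r v, v \in K -> dotv v (f r) = 0
     & forall r, r \in K -> r != 0 -> f r != 0].
Proof.
move=> hK.
set k := \dim K. set eK := vbasis K.
pose E : 'M[F]_(n.+1, k) := \matrix_(j, i) (eK`_i) 0 j.
pose Phi : 'Hom('rV[F]_(n.+1), 'rV[F]_k) := linfun (mulmxr E).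
pose O := lker Phi.
have dimO : (k <= \dim O)%N.
  have := limg_ker_dim Phi fullv.
  rewrite capfv dimvf dim_matrix mul1r.
  have ub : (\dim (Phi @: fullv) <= k)%N.
    by have := dimvS (subvf (Phi @: fullv)); rewrite dimvf dim_matrix mul1r.
  move=> h2; rewrite /O /k in hK h2 ub *. lia.
have OK : forall w v, w \in O -> v \in K -> dotv v w = 0.
  move=> w v; rewrite memv_ker lfunE /= => /eqP wE vK.
  rewrite (coord_vbasis vK) dotv_sumr big1 // => i _.
  have : (w *m E) 0 i = 0 by rewrite wE mxE.
  move=> h; rewrite dotvC /dotv.
  suff -> : (w *m ((vbasis K)`_i)^T) 0 0 = (w *m E) 0 i by rewrite h mulr0.
  rewrite !mxE; apply: eq_bigr => j _; rewrite !mxE //.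
have szw : size (take k (vbasis O)) == k by rewrite size_takel ?size_tuple.
pose wt : k.-tuple _ := Tuple szw.
have freew : free wt.
  apply: (@catl_free _ _ (drop k (vbasis O))); rewrite /= cat_take_drop.
  exact: basis_free (vbasisP O).
have wO : forall i : 'I_k, wt`_i \in O.
  move=> i; apply: (basis_mem (vbasisP O)); apply: mem_take.
  by apply: mem_nth; rewrite (eqP szw).
exists (fun r => \sum_(i < k) coord eK i r *: wt`_i); split.
- move=> a x y; rewrite scaler_sumr -big_split; apply: eq_bigr => i _.
  by rewrite coord_is_scalar scalerDl scalerA.
- move=> r v vK; apply: OK vK; apply: rpred_sum => i _; apply: memvZ; exact: wO.
- move=> r rK r0; apply/eqP => fr0; move: r0; apply/negP/negPn/eqP.
  move/freeP: freew => /(_ _ fr0) c0.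
  by rewrite (coord_vbasis rK) big1 // => i _; rewrite c0 scale0r.
Qed.

Lemma line_through (F : fieldType) m (p s : 'rV[F]_m) : p != 0 -> s \notin <[p]>%VS ->
  \dim (<[s]> + <[p]>)%VS = 2%N.
Proof.
move=> p0 sp; have : free [:: s; p] by rewrite free_cons span_seq1 sp seq1_free.
by move/eqnP; rewrite span_cons span_seq1.
Qed.

Lemma point_vline (F : fieldType) m (P : {vspace 'rV[F]_m}) :
  \dim P = 1%N -> vpick P != 0 /\ P = <[vpick P]>%VS.
Proof.
move=> dP; have p0 : vpick P != 0 by rewrite vpick0 -dimv_eq0 dP.
by split=> //; apply/eqP; rewrite eq_sym eqEdim -memvE memv_pick dim_vline p0 dP.
Qed.

Theorem corollary3p28 (F : fieldType) (n : nat) (K : PSpace F n)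
  (hK : (2 * \dim K <= n.+1)%N) :
  exists H : PSpace F n -> PSpace F n,
    (forall P : PSpace F n, is_point P -> (P <= K)%VS ->
       [/\ is_hyperplane (H P), (P <= H P)%VS,
           (* B_{X/P} is a (1,0)-blocking set of X/P *)
           (forall S : PSpace F n, is_plane S -> (P <= S)%VS ->
              exists M : PSpace F n,
                [/\ is_line M, (P <= M)%VS, (M <= S)%VS & (M <= H P)%VS])
         & (* (1) lines of K through P lie in H_P *)
           (forall L : PSpace F n, is_line L -> (P <= L)%VS -> (L <= K)%VS ->
              (L <= H P)%VS)]) /\
    (* (2) B_L blocks S_L *)
    (forall L : PSpace F n, is_line L -> (L <= K)%VS ->
       forall S : PSpace F n, is_plane S -> (K :&: S)%VS = L ->
         exists (P M : PSpace F n),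
           [/\ is_point P /\ (P <= L)%VS, is_line M, (P <= M)%VS,
               (M <= H P)%VS & ~~ (M <= K)%VS /\ (M <= S)%VS]).
Proof.
have [f [flin fK finj]] := exists_pairing _ _ _ hK.
have fZ : forall c x, f (c *: x) = c *: f x.
  have f0 : f 0 = 0.
    have := flin 1 0 0; rewrite !scale1r addr0 => e.
    by apply: (@addrI _ (f 0)); rewrite addr0 -e.
  by move=> c x; rewrite -[c *: x]addr0 flin f0 addr0.
pose h r : 'Hom('rV[F]_(n.+1), 'rV[F]_1) := linfun (mulmxr (f r)^T).
have memH : forall r v, (v \in lker (h r)) = (dotv v (f r) == 0).
  move=> r v; rewrite memv_ker lfunE /=.
  apply/eqP/eqP => [e | H0]; first by rewrite /dotv e mxE.
  by apply/rowP => i; rewrite ord1 [RHS]mxE; exact: H0.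
exists (fun P => lker (h (vpick P))); split.
- move=> P hP PK; have [p0 defP] := point_vline _ _ _ (eqP hP).
  set p := vpick P in p0 defP *.
  have pK : p \in K by rewrite memvE -defP.
  have KH : (K <= lker (h p))%VS by apply/subvP => v vK; rewrite memH fK.
  have PH : (P <= lker (h p))%VS by apply: subv_trans KH.
  have dimH : \dim (lker (h p)) = n.
    have := limg_ker_dim (h p) fullv; rewrite capfv dimvf dim_matrix mul1r.
    have ub : (\dim (h p @: fullv) <= 1)%N.
      by have := dimvS (subvf (h p @: fullv)); rewrite dimvf dim_matrix mul1r.
    have lb : (0 < \dim (h p @: fullv))%N.
      rewrite lt0n dimv_eq0; apply/negP => /eqP I0.
      have fp0 := finj p pK p0.
      suff : f p = 0 by move/eqP; rewrite (negbTE fp0).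
      apply/rowP => j; rewrite [RHS]mxE -dotv_delta; apply/eqP; rewrite -memH.
      by rewrite memv_ker; move: (memv_img (h p) (memvf (delta_mx 0 j))); rewrite I0 memv0.
    lia.
  split.
  + by rewrite /is_hyperplane dimH.
  + exact: PH.
  + move=> S hS PS.
    have dSH : (2 <= \dim (S :&: lker (h p)))%N.
      have := dimv_sum_cap S (lker (h p)); have := dimvS (subvf (S + lker (h p))).
      rewrite dimvf dim_matrix mul1r (eqP hS) dimH; lia.
    have PSH : (P <= S :&: lker (h p))%VS by rewrite subv_cap PS PH.
    have [u uSH uP] : exists2 u, u \in (S :&: lker (h p))%VS & u \notin P.
      apply/subvPn/negP => sub; move: (dimvS sub); rewrite (eqP hP); lia.
    exists (<[u]> + <[p]>)%VS; split.
    * by rewrite /is_line line_through // -defP.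
    * by rewrite {1}defP addvSr.
    * move: uSH => /memv_capP[uS _]; rewrite subv_add -!memvE uS /=.
      by move: (memv_pick P); rewrite -/p; apply: subvP.
    * move: uSH => /memv_capP[_ uH]; rewrite subv_add -!memvE uH /=.
      by move: (memv_pick P); rewrite -/p; apply: subvP.
  + by move=> L hL PL LK; apply: subv_trans LK KH.
- move=> L hL LK S hS KSL.
  have [s sS sK] : exists2 s, s \in S & s \notin K.
    apply/subvPn/negP => SK; move: KSL; rewrite (capv_idPr SK) => SL.
    by move: hS hL; rewrite SL /is_plane /is_line => /eqP ->.
  have [a0 defa] : vpick L != 0 /\ True by split=> //; rewrite vpick0 -dimv_eq0 (eqP hL).
  set a := vpick L in a0 *.
  have aL : a \in L by apply: memv_pick.
  have [b bL ba] : exists2 b, b \in L & b \notin <[a]>%VS.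
    apply/subvPn/negP => sub; move: (dimvS sub); rewrite (eqP hL) dim_vline a0; lia.
  pose bet x := dotv s (f x).
  suff [r rL /andP[r0 /eqP br]] : exists2 r, r \in L & (r != 0) && (bet r == 0).
    have rK : r \in K := subvP LK r rL.
    have rS : r \in S by move: rL; rewrite -KSL => /memv_capP[].
    have sr : s \notin <[r]>%VS by apply: contra sK => /vlineP[c ->]; apply: memvZ.
    exists <[r]>%VS, (<[s]> + <[r]>)%VS; split.
    * by split; [rewrite /is_point dim_vline r0 | rewrite -memvE].
    * by rewrite /is_line line_through.
    * exact: addvSr.
    * have /vlineP[c ->] : vpick <[r]>%VS \in <[r]>%VS by apply: memv_pick.
      rewrite subv_add -!memvE !memH (fK _ r rK) eqxx andbT fZ dotvZr.
      by move: br; rewrite /bet => ->; rewrite mulr0 eqxx.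
    * split.
      - apply: contra sK => MK; apply: (subvP MK); exact: (subvP (addvSl _ _) _ (memv_line s)).
      - by rewrite subv_add -!memvE sS rS.
  have [ba0 | ba0] := eqVneq (bet a) 0.
    by exists a => //; rewrite a0 ba0 eqxx.
  exists (bet a *: b - bet b *: a); first by rewrite memvB ?memvZ.
  apply/andP; split.
    apply/negP => /eqP e; move: ba; apply/negP/negPn/vlineP.
    exists (bet b / bet a); move/eqP: e; rewrite subr_eq0 => /eqP e.
    by rewrite mulrC -scalerA -e scalerK.
  by rewrite /bet -scaleNr flin fZ dotvDr dotvZr mulNr mulrC subrr.
Qed.
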